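(* For all integers $n\ge 0$, $k\ge 0$, $d\ge 0$ with $(n,k,d)\neq(0,0,1)$, \[ p_n^{(\mathrm{pk},\mathrm{des})}(k,d)+p_n^{(\mathrm{pk},\mathrm{des})}(k,d-1)=\sum_{l,i,j}\binom{n}{l}\, b_l^{(\mathrm{pk},\mathrm{des})}(i,j)\, b_{n-l}^{(\mathrm{pk},\mathrm{des})}(k-i,\,d-l+j), \] where the sum runs over all integers $l,i,j$.
   Context: For a permutation $\pi=\pi_1\cdots\pi_n$ of $[n]$, a descent is a position $1\le i\le n-1$ with $\pi_i>\pi_{i+1}$, an ascent one with $\pi_i<\pi_{i+1}$; $\operatorname{des}(\pi)$, $\operatorname{asc}(\pi)$ are their numbers. A peak is a position $2\le i\le n-1$ with $\pi_{i-1}<\pi_i>\pi_{i+1}$; $\operatorname{pk}(\pi)$ is the number of peaks. A ballot permutation is a permutation $\pi$ with $\operatorname{asc}(\pi_1\cdots\pi_i)\ge\operatorname{des}(\pi_1\cdots\pi_i)$ for all $i\in[n]$; $\mathscr B_n$ is the set of ballot permutations of $[n]$, and $\mathscr B_0=\{\epsilon\}$ consists of the empty permutation (and $\mathcal S_0=\{\epsilon\}$), with $\operatorname{pk}(\epsilon)=\operatorname{des}(\epsilon)=0$. Define $p_n^{(\mathrm{pk},\mathrm{des})}(k,d)=|\{\pi\in\mathcal S_n:\operatorname{pk}(\pi)=k,\operatorname{des}(\pi)=d\}|$ and $b_n^{(\mathrm{pk},\mathrm{des})}(k,d)=|\{\pi\in\mathscr B_n:\operatorname{pk}(\pi)=k,\operatorname{des}(\pi)=d\}|$;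 these are $0$ if any of $n,k,d$ is negative. Binomial coefficients $\binom{n}{l}$ are $0$ unless $0\le l\le n$. *)

(* Defs.v *)
From mathcomp Require Import all_boot all_order all_algebra all_fingroup.
Set Implicit Arguments. Unset Strict Implicit. Unset Printing Implicit Defensive.

Definition des (s : seq nat) : nat :=
  \sum_(i < (size s).-1) (nth 0 s i.+1 < nth 0 s i).
Definition asc (s : seq nat) : nat :=
  \sum_(i < (size s).-1) (nth 0 s i < nth 0 s i.+1).
Definition pk (s : seq nat) : nat :=
  \sum_(i < (size s).-2) ((nth 0 s i < nth 0 s i.+1) && (nth 0 s i.+2 < nth 0 s i.+1)).

Definition ballot (s : seq nat) : bool :=
  [forall i : 'I_(size s), des (take i.+1 s) <= asc (take i.+1 s)].

Definition pword n (pi : 'S_n) : seq nat := [seq (val (pi i)).+1 | i <- enum 'I_n].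

Definition pcount (n k d : nat) : nat :=
  #|[set pi : 'S_n | (pk (pword pi) == k) && (des (pword pi) == d)]|.
Definition bcount (n k d : nat) : nat :=
  #|[set pi : 'S_n | ballot (pword pi) && (pk (pword pi) == k) && (des (pword pi) == d)]|.

Definition pz (n k d : int) : nat :=
  match n, k, d with Posz n', Posz k', Posz d' => pcount n' k' d' | _, _, _ => 0 end.
Definition bz (n k d : int) : nat :=
  match n, k, d with Posz n', Posz k', Posz d' => bcount n' k' d' | _, _, _ => 0 end.

(* Main.v *)
Require Import Defs.
From mathcomp Require Import all_boot all_order all_algebra all_fingroup.
From mathcomp Require Import zify.
Set Implicit Arguments. Unset Strict Implicit. Unset Printing Implicit Defensive.

Definition balw (x : seq bool) : bool :=
  all (fun t => count id (take t x) <= count negb (take t x)) (iota 0 (size x).+1).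

Lemma balwP x : reflect (forall t, t <= size x -> count id (take t x) <= count negb (take t x)) (balw x).
Proof.
apply: (iffP allP) => H t.
- by move=> Ht; apply: H; rewrite mem_iota.
- by rewrite mem_iota add0n ltnS => /H.
Qed.

Definition Dw (w : seq bool) t := count id (take t w).

Lemma count_negb (x : seq bool) : count negb x = size x - count id x.
Proof. by rewrite -(count_predC id x) addKn. Qed.

Lemma D_split w a b : a <= b -> Dw w b = Dw w a + count id (drop a (take b w)).
Proof.
by move=> ab; rewrite /Dw -{1}(cat_take_drop a (take b w)) count_cat take_takel.
Qed.

Lemma count_drop_take w a b : a <= b -> count id (drop a (take b w)) = Dw w b - Dw w a.
Proof. by move=> ab; rewrite (D_split w ab) addKn. Qed.

Lemma D_le w a b : a <= b -> Dw w a <= Dw w b /\ Dw w b <= Dw w a + (b - a).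
Proof.
move=> ab; have := D_split w ab.
have := count_size id (drop a (take b w)); rewrite size_drop size_take.
case: ltnP => h1; lia.
Qed.

Lemma D_le_size w a : Dw w a <= a.
Proof. rewrite /Dw; have := count_size id (take a w); rewrite size_take; case: ifP; lia. Qed.

Lemma D_step w t : t < size w -> Dw w t.+1 = Dw w t + nth false w t.
Proof. by move=> Ht; rewrite /Dw (take_nth false Ht) -cats1 count_cat /= addn0. Qed.

Lemma D_big w t : size w <= t -> Dw w t = count id w.
Proof. by move=> Ht; rewrite /Dw take_oversize. Qed.

Definition Hle w a b := a + 2 * Dw w b <= b + 2 * Dw w a.

Lemma balw_drop w l : balw (drop l w) <-> (forall t, l <= t <= size w -> Hle w l t).
Proof.
split.
- move/balwP => H t /andP [lt tm].
  have := H (t - l); rewrite size_drop take_drop.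
  have -> : t - l + l = t by lia.
  rewrite count_negb count_drop_take // size_drop size_take.
  have [h1 h2] := D_le w lt.
  case: ltnP => h0; rewrite /Hle => h; lia.
- move=> H; apply/balwP => t'; rewrite size_drop => Ht'.
  rewrite take_drop count_negb count_drop_take ?leq_addl // size_drop size_take.
  have := H (t' + l); rewrite /Hle.
  have [h1 h2] := D_le w (leq_addl t' l).
  case: ltnP => h0 h; lia.
Qed.

Lemma balw_revtake w l : l <= size w ->
  balw (rev (map negb (take l w))) <-> (forall t, t <= l -> Hle w l t).
Proof.
move=> lm; have sz : size (take l w) = l by rewrite size_takel.
split.
- move/balwP => H t tl.
  have := H (l - t); rewrite size_rev size_map sz take_rev size_map sz.
  have -> : l - (l - t) = t by lia.
  rewrite count_rev count_negb count_rev size_rev -map_drop size_map count_map.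
  rewrite count_negb count_drop_take // size_drop sz.
  have [h1 h2] := D_le w tl.
  rewrite /Hle => h; have /h : l - t <= l by lia. lia.
- move=> H; apply/balwP => t'; rewrite size_rev size_map sz => Ht'.
  rewrite take_rev size_map sz.
  rewrite count_rev count_negb count_rev size_rev -map_drop size_map count_map.
  rewrite count_negb count_drop_take ?leq_subr // size_drop sz.
  have := H (l - t'); rewrite /Hle.
  have [h1 h2] := D_le w (leq_subr t' l).
  move=> h; have /h : l - t' <= l by lia. lia.
Qed.

Definition good w l := balw (rev (map negb (take l.-1 w))) && balw (drop l w).
Definition typ (w : seq bool) l := if l is l'.+1 then nth false w l' else true.

Lemma goodP w l : l <= (size w).+1 ->
  reflect ((forall t, t <= l.-1 -> Hle w l.-1 t) /\ (forall t, l <= t <= size w -> Hle w l t)) (good w l).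
Proof.
move=> lm; have lm' : l.-1 <= size w by lia.
apply: (iffP andP) => [[/(balw_revtake lm') h1 /balw_drop h2]|[h1 h2]]; split => //.
- by apply/(balw_revtake lm').
- by apply/balw_drop.
Qed.

Lemma Dstep' w l : Dw w l.+1 = Dw w l + nth false w l.
Proof.
case: (ltnP l (size w)) => h; first exact: D_step.
by rewrite !D_big ?nth_default //; lia.
Qed.

Lemma D_bounds w a : Dw w a <= Dw w (size w).
Proof.
case: (leqP a (size w)) => h; first by case: (D_le w h).
by rewrite (D_big (ltnW h)) (D_big (leqnn _)).
Qed.

Lemma good_typ w l : l <= (size w).+1 ->
  (good w l && typ w l) <->
  [/\ l <= size w, (forall t, t <= size w -> Hle w l t) & (forall t, t < l -> ~~ Hle w t l)].
Proof.
move=> lm; split.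
- case/andP => /(goodP lm) [h1 h2].
  case: l lm h1 h2 => [|l] lm h1 h2 /= ht.
  + split => // t tm; exact: h2.
  + have st := Dstep' w l.
    have lm2 : l < size w by move: ht; case: ltnP => // hh; rewrite nth_default.
    move: ht st => -> st.
    have gl : forall t, t <= size w -> Hle w l.+1 t.
      move=> t tm; case: (leqP l.+1 t) => tl; first by apply: h2; rewrite tl.
      have := h1 t; rewrite /Hle /= => /(_ (ltnSE tl)); lia.
    split => // t tl; have := h1 t; rewrite /Hle /= => /(_ (ltnSE tl)); lia.
- case=> lm2 gl st; apply/andP; split; last first.
  + case: l lm lm2 gl st => // l lm lm2 gl st /=.
    have := st l (ltnSn l); have := Dstep' w l; rewrite /Hle.
    by case: (nth false w l) => //=; lia.
  + apply/(goodP lm); split; last by move=> t /andP [_ tm]; apply: gl.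
    case: l lm lm2 gl st => [|l] lm lm2 gl st /=.
    * by move=> t; rewrite leqn0 => /eqP ->; rewrite /Hle.
    * move=> t tl; have := st t; rewrite ltnS => /(_ tl).
      have := Dstep' w l; rewrite /Hle.
      have := st l (ltnSn l); have := Dstep' w l; rewrite /Hle.
      case: (nth false w l) => /=; lia.
Qed.

Lemma good_ntyp w l : l <= (size w).+1 ->
  (good w l && ~~ typ w l) <->
  [/\ 0 < l, (forall t, t <= size w -> Hle w l.-1 t) & (forall t, l <= t <= size w -> ~~ Hle w t l.-1)].
Proof.
move=> lm; split.
- case/andP => /(goodP lm) [h1 h2].
  case: l lm h1 h2 => [|l] lm h1 h2 //= ht.
  have st := Dstep' w l; move: ht st; rewrite -eqbF_neg => /eqP -> st.
  split => // t.
  + move=> tm; case: (leqP t l) => tl; first exact: h1.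
    have := h2 t; rewrite tl tm /Hle /= => /(_ isT); lia.
  + move=> /andP [tl tm]; have := h2 t; rewrite tl tm /Hle /= => /(_ isT); lia.
- case=> l0 gl st; case: l lm l0 gl st => // l lm _ /= gl st.
  have wl : nth false w l = false.
    case: (ltnP l (size w)) => h; last by rewrite nth_default.
    have := st l.+1; rewrite ltnSn h /Hle => /(_ isT).
    have := Dstep' w l; case: (nth false w l) => //=; lia.
  apply/andP; split; last by rewrite /= wl.
  apply/(goodP lm); split => /= t.
  + move=> tl; apply: gl; lia.
  + move=> /andP [tl tm]; have := st t; rewrite tl tm /Hle /= => /(_ isT).
    have := Dstep' w l; rewrite wl; lia.
Qed.

Lemma Hle_refl w a : Hle w a a.
Proof. by rewrite /Hle. Qed.

Lemma exists_gmin w : exists2 l, l <= size w & forall t, t <= size w -> Hle w l t.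
Proof.
pose K t := t + 2 * Dw w (size w) - 2 * Dw w t.
have exP : exists v, has (fun t => K t == v) (iota 0 (size w).+1).
  by exists (K 0); apply/hasP; exists 0 => //; rewrite mem_iota.
case: (ex_minnP exP) => v /hasP [t0]; rewrite mem_iota add0n ltnS => t0m /eqP Kt0 vmin.
exists t0 => // t tm.
have : v <= K t by apply: vmin; apply/hasP; exists t => //; rewrite mem_iota add0n ltnS.
rewrite -Kt0 /K /Hle.
have := D_bounds w t; have := D_bounds w t0; lia.
Qed.

Lemma exists_first w : exists2 l, l <= (size w).+1 & good w l && typ w l.
Proof.
pose Gsplit l := (l <= size w) && all (fun t => Hle w l t) (iota 0 (size w).+1).
have exG : exists l, Gsplit l.
  case: (exists_gmin w) => l lm gl; exists l; rewrite /Gsplit lm andTb.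
  by apply/allP => t; rewrite mem_iota add0n ltnS; apply: gl.
case: (ex_minnP exG) => l /andP [lm /allP gl] lmin.
exists l; first lia.
apply/(good_typ (leqW lm)); split => //.
- by move=> t tm; apply: gl; rewrite mem_iota add0n ltnS.
- move=> t tl; apply/negP => hle.
  have : l <= t.
    apply: lmin; rewrite /Gsplit (leq_trans (ltnW tl) lm) andTb.
    apply/allP => u; rewrite mem_iota add0n ltnS => um.
    have := gl u; rewrite mem_iota add0n ltnS => /(_ um).
    move: hle; rewrite /Hle; lia.
  lia.
Qed.

Lemma exists_last w : exists2 l, l <= (size w).+1 & good w l && ~~ typ w l.
Proof.
pose Gsplit l := (l <= size w) && all (fun t => Hle w l t) (iota 0 (size w).+1).
have exG : exists l, Gsplit l.
  case: (exists_gmin w) => l lm gl; exists l; rewrite /Gsplit lm andTb.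
  by apply/allP => t; rewrite mem_iota add0n ltnS; apply: gl.
have ubG : forall l, Gsplit l -> l <= size w by move=> l /andP [].
case: (ex_maxnP exG ubG) => l /andP [lm /allP gl] lmax.
exists l.+1; first by [].
apply/(good_ntyp (lm : l.+1 <= (size w).+1)); split => //=.
- by move=> t tm; apply: gl; rewrite mem_iota add0n ltnS.
- move=> t /andP [tl tm]; apply/negP => hle.
  have : t <= l.
    apply: lmax; rewrite /Gsplit tm andTb.
    apply/allP => u; rewrite mem_iota add0n ltnS => um.
    have := gl u; rewrite mem_iota add0n ltnS => /(_ um).
    move: hle; rewrite /Hle; lia.
  lia.
Qed.

Lemma uniq_first w a b : a <= (size w).+1 -> b <= (size w).+1 ->
  good w a && typ w a -> good w b && typ w b -> a = b.
Proof.
wlog ab : a b / a <= b => [H|] am bm ha hb.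
  by case: (leqP a b) => h; [apply: H | apply/esym/H => //; apply: ltnW].
case/(good_typ am): ha => a1 ga sa; case/(good_typ bm): hb => b1 gb sb.
case: (ltngtP a b) ab => // alb _.
by have := sb a alb; rewrite ga.
Qed.

Lemma uniq_last w a b : a <= (size w).+1 -> b <= (size w).+1 ->
  good w a && ~~ typ w a -> good w b && ~~ typ w b -> a = b.
Proof.
wlog ab : a b / a <= b => [H|] am bm ha hb.
  by case: (leqP a b) => h; [apply: H | apply/esym/H => //; apply: ltnW].
case/(good_ntyp am): ha => a1 ga sa; case/(good_ntyp bm): hb => b1 gb sb.
case: (ltngtP a b) ab => // alb _.
have h1 : a <= b.-1 <= size w by apply/andP; split; lia.
have := sa _ h1; rewrite gb //; lia.
Qed.

Lemma sum_unique N (P : nat -> bool) :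
  (exists2 L, L < N & P L) -> (forall a b, a < N -> b < N -> P a -> P b -> a = b) ->
  \sum_(l < N) P l = 1.
Proof.
case=> L LN PL U.
rewrite (bigD1 (Ordinal LN)) //= PL big1 // => i /eqP ne.
case Pi: (P i) => //; exfalso; apply: ne; apply: val_inj => /=.
exact: U (ltn_ord i) LN Pi PL.
Qed.

Fixpoint pkw (x : seq bool) : nat :=
  if x is a :: y then (if y is b :: _ then (~~ a && b) + pkw y else 0) else 0.

Lemma pkw_cat3 x b y : pkw (x ++ b :: y) =
  pkw x + pkw y + (~~ last true x && b) + (~~ b && head false y).
Proof.
elim: x => [|a x IH] /=.
  by case: y => [|c y] /=; rewrite ?addn0 //; lia.
rewrite IH; case: x IH => [|c x] IH /=; lia.
Qed.

Lemma cond_good w l k d : l <= (size w).+1 -> good w l ->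
  [&& pkw (take l.-1 w) + pkw (drop l w) == k & count id (drop l w) + l == d + count negb (take l.-1 w)]
  = (pkw w == k) && (if typ w l then count id w == d else (count id w).+1 == d).
Proof.
move=> lm /(goodP lm) [h1 h2].
case: l lm h1 h2 => [|l] lm h1 h2 /=.
  by rewrite take0 drop0 /= ?add0n ?addn0.
have Dm := D_big (leqnn (size w)); rewrite /Dw take_size in Dm.
case: (ltnP l (size w)) => lw; last first.
  have lw' : l = size w by lia.
  rewrite lw' take_size drop_oversize ?leqnSn //= nth_default // addn0.
  rewrite count_negb.
  have := count_size id w.
  case: (pkw w == k) => //= hc.
  by apply/idP/idP => /eqP h; apply/eqP; lia.
have ew : w = take l w ++ nth false w l :: drop l.+1 w by rewrite -drop_nth // cat_take_drop.
have epk : pkw w = pkw (take l w) + pkw (drop l.+1 w).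
  rewrite {1}ew pkw_cat3.
  have -> : ~~ last true (take l w) && nth false w l = false.
    case: l lm lw h1 h2 ew => [|l] lm lw h1 h2 ew; first by rewrite take0.
    rewrite -(nth_last true) size_takel ?(ltnW lw) //= nth_take //.
    rewrite (set_nth_default false) ?(ltn_trans _ lw) //.
    have := h1 l (leqnSn l); rewrite /Hle (Dstep' w l).
    by case: (nth false w l) => //=; lia.
  have -> : ~~ nth false w l && head false (drop l.+1 w) = false.
    rewrite -nth0 nth_drop addn0.
    case: (ltnP l.+1 (size w)) => l2; last by rewrite (nth_default _ l2) andbF.
    have := h2 l.+2; rewrite ltnW ?ltnSn //= l2 /Hle => /(_ isT).
    rewrite (Dstep' w l.+1).
    case: (nth false w l.+1) => /=; last by rewrite andbF.
    move=> h; exfalso; lia.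
  rewrite /=; lia.
rewrite -epk; case: (pkw w == k) => //=.
have e1 : count id w = Dw w l.+1 + count id (drop l.+1 w).
  by rewrite /Dw -count_cat cat_take_drop.
rewrite count_negb size_takel ?(ltnW lw) // -/(Dw w l).
have := D_le_size w l; have := Dstep' w l.
case: (nth false w l) => /= st hl; apply/idP/idP => /eqP h; apply/eqP; lia.
Qed.

Lemma word_main w k d :
  \sum_(l < (size w).+2) [&& good w l, pkw (take l.-1 w) + pkw (drop l w) == k &
       count id (drop l w) + l == d + count negb (take l.-1 w)]
  = ((pkw w == k) && (count id w == d)) + ((pkw w == k) && ((count id w).+1 == d)).
Proof.
have -> : \sum_(l < (size w).+2) [&& good w l, pkw (take l.-1 w) + pkw (drop l w) == k &
       count id (drop l w) + l == d + count negb (take l.-1 w)]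
  = \sum_(l < (size w).+2) ((good w l && typ w l) * ((pkw w == k) && (count id w == d))
       + (good w l && ~~ typ w l) * ((pkw w == k) && ((count id w).+1 == d))).
  apply: eq_bigr => [[l /= lm]] _.
  case g: (good w l) => /=; last by [].
  rewrite (cond_good k d lm g).
  by case: (typ w l); case: (pkw w == k); case: (_ == d).
rewrite big_split /= -!big_distrl /=.
have s1 : \sum_(l < (size w).+2) (good w l && typ w l) = 1.
  apply: (@sum_unique _ (fun l => good w l && typ w l)).
    by case: (exists_first w) => l lm h; exists l.
  by move=> a b am bm; apply: uniq_first.
have s2 : \sum_(l < (size w).+2) (good w l && ~~ typ w l) = 1.
  apply: (@sum_unique _ (fun l => good w l && ~~ typ w l)).
    by case: (exists_last w) => l lm h; exists l.
  by move=> a b am bm; apply: uniq_last.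
by rewrite s1 s2 !mul1n.
Qed.

Fixpoint dbits (s : seq nat) : seq bool :=
  if s is a :: t then (if t is b :: _ then (b < a) :: dbits t else [::]) else [::].

Lemma size_dbits s : size (dbits s) = (size s).-1.
Proof. by elim: s => [|a [|b t] IH] //=; rewrite IH. Qed.

Lemma des_cons a b t : des [:: a, b & t] = (b < a) + des (b :: t).
Proof. by rewrite /des /= big_ord_recl. Qed.
Lemma asc_cons a b t : asc [:: a, b & t] = (a < b) + asc (b :: t).
Proof. by rewrite /asc /= big_ord_recl. Qed.
Lemma pk_cons a b c t : pk [:: a, b, c & t] = ((a < b) && (c < b)) + pk [:: b, c & t].
Proof. by rewrite /pk /= big_ord_recl. Qed.

Lemma des_dbits s : des s = count id (dbits s).
Proof.
elim: s => [|a [|b t] IH]; try by rewrite /des big_ord0.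
by rewrite des_cons IH.
Qed.

Lemma neq_lt (a b : nat) : a != b -> (a < b) = ~~ (b < a).
Proof. by move=> ne; rewrite ltn_neqAle ne leqNgt. Qed.

Lemma asc_dbits s : uniq s -> asc s = count negb (dbits s).
Proof.
elim: s => [|a [|b t] IH]; try by rewrite /asc big_ord0.
move=> /= /andP [ha hu]; rewrite asc_cons IH //= neq_lt //.
by apply: contra ha => /eqP ->; rewrite inE eqxx.
Qed.

Lemma pk_dbits s : uniq s -> pk s = pkw (dbits s).
Proof.
elim: s => [|a [|b [|c t]] IH]; try by rewrite /pk big_ord0.
move=> /= /andP [ha hu]; rewrite pk_cons IH //= neq_lt //.
by apply: contra ha => /eqP ->; rewrite inE eqxx.
Qed.

Lemma dbits_take j s : dbits (take j s) = take j.-1 (dbits s).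
Proof.
elim: s j => [|a t IH] [|j] //=; first by rewrite take0.
case: t IH => [|b t] IH //=.
case: j => [|j] //.
by move: (IH j.+1) => /= ->.
Qed.

Lemma dbits_drop j s : dbits (drop j s) = drop j (dbits s).
Proof.
elim: s j => [|a t IH] [|j] //=; first by rewrite drop0.
by rewrite IH; case: t IH => [|b t] IH //=; rewrite drop_nil.
Qed.

Lemma dbits_rcons s x y : s != [::] -> dbits (rcons s x) = rcons (dbits s) (x < last y s).
Proof.
elim: s y => [|a t IH] y // _.
case: t IH => [|b t] IH //.
have -> : rcons [:: a, b & t] x = a :: rcons (b :: t) x by [].
have -> : dbits (a :: rcons (b :: t) x) = (b < a) :: dbits (rcons (b :: t) x) by [].
by rewrite (IH y).
Qed.

Lemma dbits_rev s : uniq s -> dbits (rev s) = rev (map negb (dbits s)).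
Proof.
elim: s => [|a [|b t] IH] //= /andP [ha hu].
rewrite rev_cons (dbits_rcons a b); last by rewrite rev_cons; case: (rev t).
rewrite IH // rev_cons last_rcons rev_cons /= neq_lt //.
by apply: contra ha => /eqP ->; rewrite inE eqxx.
Qed.

Lemma ballot_dbits s : uniq s -> ballot s = balw (dbits s).
Proof.
move=> us; apply/forallP/balwP => [H t|H i].
- rewrite size_dbits => ht.
  case: s us H ht => [|a s'] us H ht; first by [].
  have hi : t < size (a :: s') by [].
  have := H (Ordinal hi); rewrite des_dbits asc_dbits ?take_uniq // dbits_take.
  by move=> h; exact: h.
- rewrite des_dbits asc_dbits ?take_uniq // dbits_take /=; apply: H.
  rewrite size_dbits; have := ltn_ord i; lia.
Qed.

Lemma dbits_map f s : {in s &, forall x y, (f x < f y) = (x < y)} -> dbits (map f s) = dbits s.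
Proof.
elim: s => [|a t IH] // H.
have H' : {in t &, forall x y, (f x < f y) = (x < y)}.
  by move=> x y hx hy; apply: H; rewrite inE ?hx ?hy orbT.
case: t IH H H' => [|b t] IH H H' //.
have -> : dbits (map f [:: a, b & t]) = (f b < f a) :: dbits (map f (b :: t)) by [].
by rewrite IH // H // !inE eqxx ?orbT.
Qed.

Lemma pkw_rcons x b : pkw (rcons x b) = pkw x + (~~ last true x && b).
Proof. by rewrite -cats1 pkw_cat3 /= andbF !addn0. Qed.

Lemma pkw_revneg x : pkw (rev (map negb x)) = pkw x.
Proof.
elim: x => [|a x IH] //.
rewrite map_cons rev_cons pkw_rcons IH.
case: x IH => [|b x] IH; first by [].
have -> : pkw [:: a, b & x] = (~~ a && b) + pkw (b :: x) by [].
by rewrite map_cons rev_cons last_rcons negbK andbC addnC.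
Qed.

Lemma pi_main (p : seq nat) k d : uniq p -> 0 < size p ->
  \sum_(l < (size p).+1) [&& ballot (rev (take l p)), ballot (drop l p),
        pk (rev (take l p)) + pk (drop l p) == k & des (drop l p) + l == d + des (rev (take l p))]
  = ((pk p == k) && (des p == d)) + ((pk p == k) && ((des p).+1 == d)).
Proof.
move=> up sp.
have := word_main (dbits p) k d.
rewrite size_dbits -pk_dbits // -des_dbits.
have -> : (size p).-1.+2 = (size p).+1 by lia.
move=> <-; apply: eq_bigr => [[l lp]] _ /=.
have ut : uniq (take l p) := take_uniq l up.
have ud : uniq (drop l p) := drop_uniq l up.
have ur : uniq (rev (take l p)) by rewrite rev_uniq.
rewrite /good (ballot_dbits ur) (ballot_dbits ud) (pk_dbits ur) (pk_dbits ud).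
rewrite (des_dbits (drop l p)) (des_dbits (rev (take l p))).
rewrite (dbits_rev ut) dbits_take dbits_drop pkw_revneg count_rev count_map.
by rewrite andbA.
Qed.

Definition invP (P : pred (seq nat)) := forall (f : nat -> nat) (s : seq nat), uniq s ->
  {in s &, forall x y, (f x < f y) = (x < y)} -> P (map f s) = P s.

Lemma mono_inj (f : nat -> nat) (s : seq nat) : {in s &, forall x y, (f x < f y) = (x < y)} -> {in s &, injective f}.
Proof.
move=> H x y hx hy e; case: (ltngtP x y) => // h.
- by have := H _ _ hx hy; rewrite e h ltnn.
- by have := H _ _ hy hx; rewrite e h ltnn.
Qed.

Lemma inv_of (P : pred (seq nat)) (R : seq bool -> bool) :
  (forall s, uniq s -> P s = R (dbits s)) -> invP P.
Proof.
move=> H f s us hm; rewrite H ?H // ?dbits_map //.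
by rewrite (map_inj_in_uniq (mono_inj hm)).
Qed.

Lemma perms_map (f g : nat -> nat) (W : seq nat) : {in W, cancel f g} ->
  perm_eq (permutations (map f W)) (map (map f) (permutations W)).
Proof.
move=> fK.
have E : forall u, perm_eq u W -> map g (map f u) = u.
  move=> u pu; rewrite -map_comp -[RHS]map_id; apply/eq_in_map => x hx /=.
  by apply: fK; rewrite -(perm_mem pu).
have inj : {in permutations W &, injective (map f)}.
  move=> u v; rewrite !mem_permutations => pu pv e.
  by rewrite -(E u pu) -(E v pv) e.
apply: uniq_perm; first exact: permutations_uniq.
  by rewrite (map_inj_in_uniq inj) permutations_uniq.
move=> t; rewrite mem_permutations; apply/idP/idP.
- move=> pt; apply/mapP; exists (map g t).
    rewrite mem_permutations -(E W (perm_refl W)).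
    exact: perm_map.
  rewrite -map_comp -[LHS]map_id; apply/esym/eq_in_map => y /=.
  rewrite (perm_mem pt) => /mapP [x hx ->]; by rewrite fK.
- by case/mapP => u; rewrite mem_permutations => pu ->; apply: perm_map.
Qed.

Definition cnt (P : pred (seq nat)) (V : seq nat) := count P (permutations V).

Lemma cnt_perm P V V' : perm_eq V V' -> cnt P V = cnt P V'.
Proof. by move=> h; rewrite /cnt; apply/seq.permP/perm_permutations. Qed.

Lemma cnt_map P (f g : nat -> nat) (W : seq nat) : invP P -> uniq W -> {in W, cancel f g} ->
  {in W &, forall x y, (f x < f y) = (x < y)} -> cnt P (map f W) = cnt P W.
Proof.
move=> iP uW fK hm; rewrite /cnt (seq.permP (perms_map fK)) count_map.
apply: eq_in_count => u; rewrite mem_permutations => pu /=.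
apply: iP; first by rewrite (perm_uniq pu).
by move=> x y hx hy; apply: hm; rewrite -(perm_mem pu).
Qed.

Lemma cnt_std P V : invP P -> uniq V -> cnt P V = cnt P (iota 1 (size V)).
Proof.
move=> iP uV.
set S := sort leq V.
have pS : perm_eq S V by apply/permPl; apply: perm_sort.
have uS : uniq S by rewrite sort_uniq.
have sS : sorted ltn S by rewrite ltn_sorted_uniq_leq uS sort_sorted //; exact: leq_total.
have szS : size S = size V by rewrite size_sort.
rewrite -(cnt_perm P pS).
pose f x := nth 0 S x.-1; pose g y := (index y S).+1.
have eS : S = map f (iota 1 (size V)).
  apply: (@eq_from_nth _ 0); first by rewrite size_map size_iota.
  move=> i hi; rewrite (nth_map 0); last by rewrite size_iota -szS.
  by rewrite nth_iota -?szS // /f add1n.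
rewrite {1}eS; apply: (cnt_map (g:=g)) => //; first exact: iota_uniq.
- move=> x; rewrite mem_iota => /andP [h1 h2].
  by rewrite /g /f index_uniq //; [lia | rewrite szS; lia].
- move=> x y; rewrite !mem_iota => /andP [x1 x2] /andP [y1 y2].
  have hom := sorted_ltn_nth ltn_trans 0 sS.
  have hx : x.-1 \in [pred n | n < size S] by rewrite inE szS; lia.
  have hy : y.-1 \in [pred n | n < size S] by rewrite inE szS; lia.
  rewrite /f; case: (ltngtP x y) => h.
  + by apply: hom => //; lia.
  + apply/negbTE; rewrite -leqNgt ltnW //; apply: hom => //; lia.
  + by rewrite h ltnn.
Qed.

Fixpoint subs (U : seq nat) (l : nat) : seq (seq nat) :=
  match U with
  | [::] => if l is 0 then [:: [::]] else [::]
  | x :: U' => if l is l'.+1 then map (cons x) (subs U' l') ++ subs U' l else [:: [::]]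
  end.

Lemma consI (x : nat) : injective (cons x).
Proof. by move=> ? ? [].
Qed.

Lemma size_subs U l : size (subs U l) = 'C(size U, l).
Proof.
elim: U l => [|x U IH] [|l] //=.
by rewrite size_cat size_map !IH binS addnC.
Qed.

Lemma mem_subs U l A : uniq U -> (A \in subs U l) = subseq A U && (size A == l).
Proof.
elim: U l A => [|x U IH] l A /=.
  case: l => [|l] _; rewrite ?inE; case: A => //.
move=> /andP [xU uU].
case: l => [|l]; rewrite ?inE.
  by case: A => [|a A] //=; rewrite andbF.
rewrite mem_cat IH //; case: A => [|a A] /=.
  by rewrite andbF orbF; apply/negbTE/negP => /mapP [B _].
case: (eqVneq a x) => [->|ne].
- rewrite (mem_map (@consI x)) IH // eqSS.
  have -> : subseq (x :: A) U = false.
    by apply/negP => /mem_subseq /(_ x); rewrite inE eqxx => /(_ isT); apply/negP.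
  by rewrite orbF.
- have -> : (a :: A \in [seq x :: i | i <- subs U l]) = false.
    by apply/negP => /mapP [B _ [e _]]; move: ne; rewrite e eqxx.
  by [].
Qed.

Lemma uniq_subs U l : uniq U -> uniq (subs U l).
Proof.
elim: U l => [|x U IH] [|l] //= /andP [xU uU].
rewrite cat_uniq (map_inj_uniq (@consI x)) !IH //=.
rewrite andbT; apply/hasPn => B; rewrite mem_subs // => /andP [sB _]; apply/negP => /mapP [C _ eB].
by move: sB; rewrite eB => /mem_subseq /(_ x); rewrite inE eqxx => /(_ isT); apply/negP.
Qed.

Definition complU (U a : seq nat) := filter (predC (mem a)) U.
Definition PA (U : seq nat) l := [seq a | A <- subs U l, a <- permutations A].
Definition L2 (U : seq nat) l := [seq a ++ b | a <- PA U l, b <- permutations (complU U a)].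

Lemma perm_filter_mem (U a : seq nat) : uniq U -> uniq a -> all (mem U) a ->
  perm_eq a (filter (mem a) U).
Proof.
move=> uU ua /allP aU; apply: uniq_perm => //; first exact: filter_uniq.
move=> x; rewrite mem_filter /=; apply/idP/andP => [xa|[]//]; split => //; exact: aU.
Qed.

Lemma mem_PA U l a : uniq U -> (a \in PA U l) = [&& uniq a, size a == l & all (mem U) a].
Proof.
move=> uU; apply/idP/idP.
- case/allpairsPdep => A [a' [hA ha' ->]].
  move: hA; rewrite mem_subs // => /andP [sA /eqP szA].
  move: ha'; rewrite mem_permutations => pa.
  rewrite (perm_uniq pa) (subseq_uniq sA uU) (perm_size pa) szA eqxx /=.
  by apply/allP => x; rewrite (perm_mem pa) => /(mem_subseq sA).
- case/and3P => ua /eqP sa aU; apply/allpairsPdep.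
  exists (filter (mem a) U), a; split => //.
  + rewrite mem_subs // filter_subseq /=.
    by rewrite -(perm_size (perm_filter_mem uU ua aU)) sa.
  + by rewrite mem_permutations perm_filter_mem.
Qed.

Lemma uniq_PA U l : uniq U -> uniq (PA U l).
Proof.
move=> uU; apply: allpairs_uniq_dep; first exact: uniq_subs.
  by move=> A _; exact: permutations_uniq.
move=> [A1 a1] [A2 a2] /allpairsPdep [B1 [b1 [h1 hb1 e1]]] /allpairsPdep [B2 [b2 [h2 hb2 e2]]] /= e.
move: e1 e2 e => [-> ->] [-> ->] /= e.
move: h1 h2 hb1 hb2; rewrite !mem_subs // !mem_permutations.
move=> /andP [s1 _] /andP [s2 _] p1 p2.
subst b2.
have eB : B1 = B2.
  rewrite (subseq_uniqP uU s1) (subseq_uniqP uU s2); apply: eq_filter => x.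
  by rewrite -(perm_mem p1) (perm_mem p2).
by subst B2.
Qed.

Lemma mem_drop_uniq (p : seq nat) l x : uniq p ->
  (x \in drop l p) = (x \in p) && (x \notin take l p).
Proof.
move=> up; have := up; rewrite -{1}(cat_take_drop l p) cat_uniq => /and3P [_ /hasPn h _].
have -> : (x \in p) = (x \in take l p) || (x \in drop l p) by rewrite -mem_cat cat_take_drop.
case xd: (x \in drop l p); rewrite ?orbT /=.
  by rewrite (h x xd).
by case: (x \in take l p).
Qed.

Lemma perm_L2 U l : uniq U -> l <= size U -> perm_eq (permutations U) (L2 U l).
Proof.
move=> uU lU; apply: uniq_perm; first exact: permutations_uniq.
- apply: allpairs_uniq_dep; first exact: uniq_PA.
    by move=> a _; exact: permutations_uniq.
  move=> [a1 b1] [a2 b2] /allpairsPdep [c1 [d1 [h1 hd1 e1]]] /allpairsPdep [c2 [d2 [h2 hd2 e2]]].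
  move: e1 e2 => [-> ->] [-> ->] /= e.
  move: h1 h2; rewrite !mem_PA // => /and3P [_ /eqP s1 _] /and3P [_ /eqP s2 _].
  have ec : c1 = c2.
    by rewrite -(take_size_cat d1 s1) e take_size_cat.
  subst c2; have ed : d1 = d2.
    by rewrite -(drop_size_cat d1 s1) e drop_size_cat.
  by subst d2.
- move=> p; rewrite mem_permutations; apply/idP/idP.
  + move=> pU; apply/allpairsPdep; exists (take l p), (drop l p); split.
    * have up : uniq p by rewrite (perm_uniq pU).
      rewrite mem_PA // take_uniq //= size_takel ?(perm_size pU) // eqxx /=.
      by apply/allP => x /mem_take; rewrite (perm_mem pU).
    * have up : uniq p by rewrite (perm_uniq pU).
      rewrite mem_permutations; apply: uniq_perm; first exact: drop_uniq.
        exact: filter_uniq.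
      by move=> x; rewrite mem_drop_uniq // mem_filter (perm_mem pU) andbC.
    * by rewrite cat_take_drop.
  + case/allpairsPdep => a [b [ha hb ->]].
    move: ha hb; rewrite mem_PA // mem_permutations => /and3P [ua _ aU] pb.
    apply: (perm_trans (perm_cat (perm_filter_mem uU ua aU) pb)).
    by apply/permPl; apply: perm_filterC.
Qed.

Lemma allpairs_flat (S T : Type) (f : S -> T -> seq nat) (s : seq S) (t : S -> seq T) :
  [seq f x y | x <- s, y <- t x] = flatten [seq [seq f x y | y <- t x] | x <- s].
Proof. by elim: s => //= x s ->. Qed.

Lemma sumn_const (T : Type) (s : seq T) c : sumn [seq c | _ <- s] = size s * c.
Proof. by elim: s => //= x s ->; rewrite mulSn. Qed.

Lemma sumn_mulb (T : eqType) (P : pred T) (s : seq T) (F : T -> nat) c :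
  {in s, forall x, F x = c} -> sumn [seq P x * F x | x <- s] = count P s * c.
Proof.
elim: s => //= x s IH H; rewrite IH ?H ?mem_head // ?mulnDl //.
by move=> y hy; apply: H; rewrite inE hy orbT.
Qed.

Lemma size_comp U a : uniq U -> uniq a -> all (mem U) a -> size (complU U a) = size U - size a.
Proof.
move=> uU ua aU; rewrite /complU size_filter.
rewrite -(count_predC (mem a) U) (perm_size (perm_filter_mem uU ua aU)) size_filter.
by rewrite addKn.
Qed.

Lemma shuffle P Q U l : invP P -> invP Q -> uniq U -> l <= size U ->
  count (fun p => P (take l p) && Q (drop l p)) (permutations U)
  = 'C(size U, l) * cnt P (iota 1 l) * cnt Q (iota 1 (size U - l)).
Proof.
move=> iP iQ uU lU.
rewrite (seq.permP (perm_L2 uU lU)) /L2 allpairs_flat count_flatten -map_comp.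
set F := (X in sumn (map X _)).
rewrite ((eq_in_map F (fun a => P a * count Q (permutations (complU U a))) (PA U l)).1); last first.
  move=> a; rewrite mem_PA // => /and3P [ua /eqP sa aU].
  rewrite /F /= count_map.
  rewrite (@eq_count _ _ (fun b => P a && Q b)); last first.
    by move=> b /=; rewrite take_size_cat // drop_size_cat.
  by case: (P a) => /=; rewrite ?mul1n ?mul0n // count_pred0.
rewrite (@sumn_mulb _ P _ (fun a => count Q (permutations (complU U a))) (cnt Q (iota 1 (size U - l)))); last first.
  move=> a; rewrite mem_PA // => /and3P [ua /eqP sa aU].
  rewrite -sa -(size_comp uU ua aU); apply: cnt_std => //; exact: filter_uniq.
rewrite /PA allpairs_flat count_flatten -map_comp.
rewrite ((eq_in_map _ (fun=> cnt P (iota 1 l)) _).1); last first.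
  move=> A; rewrite mem_subs // => /andP [sA /eqP sz] /=.
  rewrite count_map -sz; apply: cnt_std => //; exact: subseq_uniq sA uU.
by rewrite sumn_const size_subs.
Qed.

Lemma pword_inj n : injective (@pword n).
Proof.
move=> p1 p2 e; apply/permP => i.
have := (eq_in_map _ _ _).2 e i; rewrite mem_enum => /(_ isT) [] /val_inj.
by [].
Qed.

Lemma pword_perm n (p : 'S_n) : perm_eq (pword p) (iota 1 n).
Proof.
apply: uniq_perm; last first.
- move=> x; apply/mapP/idP.
  + by case=> i _ ->; rewrite mem_iota add1n !ltnS leq0n ltn_ord.
  + rewrite mem_iota add1n => /andP [x1 x2].
    have hy : x.-1 < n by lia.
    exists (p^-1 (Ordinal hy))%g; first by rewrite mem_enum.
    by rewrite permKV /=; lia.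
- exact: iota_uniq.
- rewrite map_inj_uniq ?enum_uniq // => i j /= [] /val_inj; exact: perm_inj.
Qed.

Lemma card_pw n (P : pred (seq nat)) :
  #|[set p : 'S_n | P (pword p)]| = count P (permutations (iota 1 n)).
Proof.
rewrite -sum1_card (eq_bigl (fun p => P (pword p))); last by move=> p; rewrite inE.
rewrite sum1_count -(count_map (@pword n) P).
apply/seq.permP; apply: uniq_perm.
- by rewrite map_inj_uniq ?index_enum_uniq //; exact: pword_inj.
- exact: permutations_uniq.
have sub : {subset map (@pword n) (index_enum 'S_n) <= permutations (iota 1 n)}.
  by move=> s /mapP [p _ ->]; rewrite mem_permutations pword_perm.
have u1 : uniq (map (@pword n) (index_enum 'S_n)).
  by rewrite map_inj_uniq ?index_enum_uniq //; exact: pword_inj.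
have hsz : size (permutations (iota 1 n)) <= size (map (@pword n) (index_enum 'S_n)).
  rewrite size_map size_permutations ?iota_uniq // size_iota.
  have := card_Sn n; rewrite cardT enumT => <-.
  by rewrite /index_enum locked_withE.
by have [_ E] := uniq_min_size u1 sub hsz.
Qed.

Lemma count_sum (T : Type) (P : pred T) (s : seq T) : count P s = \sum_(x <- s) P x.
Proof. by elim: s => [|x s IH]; rewrite ?big_nil ?big_cons //= IH. Qed.

Lemma perm_map_rev (U : seq nat) : perm_eq (map rev (permutations U)) (permutations U).
Proof.
apply: uniq_perm; last first.
- move=> t; rewrite mem_permutations; apply/mapP/idP.
  + by case=> u; rewrite mem_permutations => pu ->; rewrite perm_rev.
  + by move=> pt; exists (rev t); rewrite ?revK // mem_permutations perm_rev.
- exact: permutations_uniq.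
- by rewrite map_inj_uniq ?permutations_uniq //; exact: (can_inj revK).
Qed.

Definition PP (i j : nat) (a : seq nat) := [&& ballot (rev a), pk (rev a) == i & des (rev a) == j].
Definition QQ (i k l d j : nat) (b : seq nat) := [&& ballot b, pk b + i == k & des b + l == d + j].

Lemma bcount_rev l i j : bcount l i j = count (PP i j) (permutations (iota 1 l)).
Proof.
rewrite /bcount (card_pw l (fun s => ballot s && (pk s == i) && (des s == j))).
rewrite -(seq.permP (perm_map_rev _)) count_map; apply: eq_count => a /=.
by rewrite /PP andbA.
Qed.

Lemma inv_PP i j : invP (PP i j).
Proof.
apply: (@inv_of _ (fun w => [&& balw (rev (map negb w)), pkw w == i & count negb w == j])) => s us.
have ur : uniq (rev s) by rewrite rev_uniq.
rewrite /PP (ballot_dbits ur) (pk_dbits ur) des_dbits (dbits_rev us) pkw_revneg count_rev count_map.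
by [].
Qed.

Lemma inv_QQ i k l d j : invP (QQ i k l d j).
Proof.
apply: (@inv_of _ (fun w => [&& balw w, pkw w + i == k & count id w + l == d + j])) => s us.
by rewrite /QQ (ballot_dbits us) (pk_dbits us) des_dbits.
Qed.

Lemma pz_pos (n k d : nat) : pz n k d = count (fun s => (pk s == k) && (des s == d)) (permutations (iota 1 n)).
Proof. by rewrite /= /pcount (card_pw n (fun s => (pk s == k) && (des s == d))). Qed.

Lemma pz_pred (n k d : nat) : pz n k (d%:Z - 1)%R =
  count (fun s => (pk s == k) && ((des s).+1 == d)) (permutations (iota 1 n)).
Proof.
case: d => [|d].
  have -> : (0%:Z - 1)%R = Negz 0 by [].
  by rewrite /= (eq_count (a2 := pred0)) ?count_pred0 // => s; rewrite andbF.
have -> : (d.+1%:Z - 1)%R = Posz d by lia.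
by rewrite pz_pos; apply: eq_count => s; rewrite eqSS.
Qed.

Lemma bz_shift (m i k l d j : nat) :
  bz m (k%:Z - i%:Z)%R (d%:Z - l%:Z + j%:Z)%R = count (QQ i k l d j) (permutations (iota 1 m)).
Proof.
case E1: (k%:Z - i%:Z)%R => [a|a]; last first.
  rewrite /= (eq_count (a2 := pred0)) ?count_pred0 // => b /=.
  rewrite /QQ; have : k < i by lia.
  by case: (pk b + i =P k) => [<-|]; rewrite ?andbF //; lia.
case E2: (d%:Z - l%:Z + j%:Z)%R => [c|c]; last first.
  rewrite /= (eq_count (a2 := pred0)) ?count_pred0 // => b /=.
  rewrite /QQ; have : d + j < l by lia.
  by case: (des b + l =P d + j) => [e|]; rewrite ?andbF //; lia.
rewrite /= /bcount (card_pw m (fun s => ballot s && (pk s == a) && (des s == c))); apply: eq_count => b /=.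
rewrite /QQ -andbA; case: (ballot b) => //=.
by apply/andP/andP => [] [/eqP h1 /eqP h2]; split; apply/eqP; lia.
Qed.

Lemma sum_pick N a (F : nat -> nat) : a < N -> (forall i, i != a -> F i = 0) ->
  \sum_(i < N) F i = F a.
Proof.
move=> ha H; rewrite (bigD1 (Ordinal ha)) //= big1 ?addn0 // => i /eqP ne.
apply: H; apply/eqP => e; apply: ne; exact: val_inj.
Qed.

Lemma pkw_le x : pkw x <= size x.
Proof. elim: x => [|a [|b y] IH] //=; move: IH => /= IH; case: (~~ a && b) => /=; lia. Qed.

Lemma pk_le s : uniq s -> pk s <= size s.
Proof.
move=> us; rewrite pk_dbits //; apply: leq_trans (pkw_le _) _.
by rewrite size_dbits leq_pred.
Qed.

Lemma des_le s : des s <= size s.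
Proof.
rewrite des_dbits; apply: leq_trans (count_size _ _) _.
by rewrite size_dbits leq_pred.
Qed.

Definition Gsplit k d l (p : seq nat) := [&& ballot (rev (take l p)), ballot (drop l p),
  pk (rev (take l p)) + pk (drop l p) == k & des (drop l p) + l == d + des (rev (take l p))].

Lemma inner p n k d l : uniq p -> size p = n -> l <= n ->
  \sum_(i < n.+1) \sum_(j < n.+1) (PP i j (take l p) && QQ i k l d j (drop l p)) = Gsplit k d l p.
Proof.
move=> up sp ln.
set s := rev (take l p); set t := drop l p.
have us : uniq s by rewrite rev_uniq take_uniq.
have szs : size s <= n by rewrite size_rev size_take; case: ltnP; lia.
have h1 : pk s < n.+1 by rewrite ltnS; apply: leq_trans (pk_le us) szs.
have h2 : des s < n.+1 by rewrite ltnS; apply: leq_trans (des_le s) szs.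
rewrite (@sum_pick _ (pk s) (fun i => \sum_(j < n.+1) (PP i j (take l p) && QQ i k l d j t))) //; last first.
  move=> i ne; apply: big1 => j _; rewrite /PP -/s.
  by rewrite (negbTE (_ : pk s != i)) ?andbF //= eq_sym.
rewrite (@sum_pick _ (des s) (fun j => PP (pk s) j (take l p) && QQ (pk s) k l d j t)) //; last first.
  move=> j ne; rewrite /PP -/s.
  by rewrite (negbTE (_ : des s != j)) ?andbF //= eq_sym.
rewrite /PP /QQ /Gsplit -/s -/t !eqxx (addnC (pk t)) !andbT.
by case: (ballot s).
Qed.

Lemma shuffle_n P Q n l : invP P -> invP Q -> l <= n ->
  count (fun p => P (take l p) && Q (drop l p)) (permutations (iota 1 n))
  = 'C(n, l) * cnt P (iota 1 l) * cnt Q (iota 1 (n - l)).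
Proof.
move=> iP iQ ln; have := shuffle iP iQ (iota_uniq 1 n) (_ : l <= size (iota 1 n)).
by rewrite size_iota; apply.
Qed.

Theorem theorem3p1 (n k d : nat) :
  (n, k, d) != (0%N, 0%N, 1%N) ->
  (pz n k d + pz n k (d%:Z - 1)%R)%N =
  \sum_(l < n.+1) \sum_(i < n.+1) \sum_(j < n.+1)
     'C(n, l) * bz l i j * bz (n - l)%N (k%:Z - i%:Z)%R (d%:Z - l%:Z + j%:Z)%R.
Proof.
move=> hnkd.
have eR : forall l : 'I_n.+1,
  \sum_(i < n.+1) \sum_(j < n.+1)
     'C(n, l) * bz l i j * bz (n - l)%N (k%:Z - i%:Z)%R (d%:Z - l%:Z + j%:Z)%R
  = \sum_(p <- permutations (iota 1 n)) Gsplit k d l p.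
  move=> l.
  have ln : (l <= n)%N by rewrite -ltnS ltn_ord.
  transitivity (\sum_(i < n.+1) \sum_(j < n.+1)
     count (fun p => PP i j (take l p) && QQ i k l d j (drop l p)) (permutations (iota 1 n))).
    apply: eq_bigr => i _; apply: eq_bigr => j _.
    rewrite [bz l i j]/= bcount_rev bz_shift (shuffle_n (inv_PP i j) (inv_QQ i k l d j) ln).
    by [].
  transitivity (\sum_(i < n.+1) \sum_(j < n.+1) \sum_(p <- permutations (iota 1 n))
     (PP i j (take l p) && QQ i k l d j (drop l p) : nat)).
    by apply: eq_bigr => i _; apply: eq_bigr => j _; apply: count_sum.
  transitivity (\sum_(i < n.+1) \sum_(p <- permutations (iota 1 n)) \sum_(j < n.+1)
     (PP i j (take l p) && QQ i k l d j (drop l p) : nat)).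
    by apply: eq_bigr => i _; apply: exchange_big.
  rewrite exchange_big /=.
  apply: eq_big_seq => p; rewrite mem_permutations => pp.
  have up : uniq p by rewrite (perm_uniq pp) iota_uniq.
  have sp : size p = n by rewrite (perm_size pp) size_iota.
  by rewrite -(inner k d up sp ln).
rewrite pz_pos pz_pred !count_sum -big_split.
rewrite (eq_bigr _ (fun l _ => eR l)) exchange_big /=.
apply: eq_big_seq => p; rewrite mem_permutations => pp.
have up : uniq p by rewrite (perm_uniq pp) iota_uniq.
have sp : size p = n by rewrite (perm_size pp) size_iota.
case: n hnkd eR pp sp => [|n] hnkd eR pp sp.
  move: sp; case: p up pp => // _ _ _.
  rewrite big_ord1 /Gsplit /=.
  have r0 : rev [::] = [::] :> seq nat by [].
  have b0 : ballot [::] = true by rewrite (ballot_dbits (isT : uniq [::])).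
  have p0 : pk [::] = 0 by rewrite pk_dbits.
  have d0 : des [::] = 0 by rewrite des_dbits.
  rewrite r0 b0 p0 d0 /=; clear eR.
  by case: k hnkd => [|k]; case: d => [|[|d]].
by rewrite -sp -(pi_main k d up) ?sp.
Qed.
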